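(* Let $P=(P_1,\ldots,P_n)$ be a reduced profile of linear orders on a finite set of alternatives $A$, with voter set $N=\{1,\ldots,n\}$, and suppose $P$ is single-crossing with respect to some tree on $N$. Then the tree on $N$ which is minimal with respect to $P$ and with respect to which $P$ is single-crossing is unique.
   Context: Voter $i$ prefers $a$ to $b$ is written $a\succ_i b$. A profile is reduced if no two voters have identical linear orders. Given a tree $T=(N,E)$ on the voter set, the profile is single-crossing with respect to $T$ if for every pair of distinct alternatives $a,b$ one of the following holds: (i) there is an edge $e\in E$ (an ''$ab$-cut'') such that, removing $e$ from $T$, the two resulting subtrees have vertex sets $V_1,V_2$ with all voters in $V_1$ preferring $a$ to $b$ and all voters in $V_2$ preferring $b$ to $a$; or (ii) all voters prefer $a$ to $b$, or all voters prefer $b$ to $a$. $T$ is minimal with respect to $P$ if every edge of $T$ is an $ab$-cut for some pair of alternatives $a,b$. *)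

(* Defs.v *)
From mathcomp Require Import all_boot.
Set Implicit Arguments. Unset Strict Implicit. Unset Printing Implicit Defensive.

(* A (strict) linear order on alternatives: r a b means "a is preferred to b". *)
Definition linear_order (A : finType) (r : rel A) : Prop :=
  [/\ irreflexive r, transitive r & forall a b, a != b -> r a b || r b a].

Definition profile (A : finType) (n : nat) (P : 'I_n -> rel A) : Prop :=
  forall i, linear_order (P i).

Definition reduced (A : finType) (n : nat) (P : 'I_n -> rel A) : Prop :=
  forall i j, P i =2 P j -> i = j.

Definition simple_graph (V : finType) (T : rel V) : Prop :=
  symmetric T /\ irreflexive T.

Definition has_cycle (V : finType) (T : rel V) : Prop :=
  exists (x : V) (p : seq V),
    [/\ uniq (x :: p), 2 <= size p, path T x p & T (last x p) x].

Definition is_tree (V : finType) (T : rel V) : Prop :=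
  [/\ simple_graph T, (forall x y, connect T x y) & ~ has_cycle T].

Definition remove_edge (V : finType) (T : rel V) (u v : V) : rel V :=
  fun x y => T x y && ([set x; y] != [set u; v]).

(* The edge {u,v} of T is an ab-cut: removing it, all voters in the
   component V1 of u prefer a to b, all voters in the component V2 of v
   prefer b to a (the orientation is covered since (u,v) and (v,u) are
   both listed as edges). *)
Definition ab_cut (A : finType) (n : nat) (P : 'I_n -> rel A)
    (T : rel 'I_n) (u v : 'I_n) (a b : A) : Prop :=
  [/\ T u v,
      (forall x, connect (remove_edge T u v) u x -> P x a b) &
      (forall x, connect (remove_edge T u v) v x -> P x b a)].

Definition single_crossing_wrt (A : finType) (n : nat) (P : 'I_n -> rel A)
    (T : rel 'I_n) : Prop :=
  forall a b : A, a != b ->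
    (exists u v, ab_cut P T u v a b)
    \/ (forall i, P i a b) \/ (forall i, P i b a).

Definition minimal_wrt (A : finType) (n : nat) (P : 'I_n -> rel A)
    (T : rel 'I_n) : Prop :=
  forall u v, T u v -> exists a b, ab_cut P T u v a b \/ ab_cut P T v u a b.

(* Main.v *)
From Stdlib Require Import Classical.
Require Import Defs.
From mathcomp Require Import all_boot.
Set Implicit Arguments. Unset Strict Implicit. Unset Printing Implicit Defensive.

Lemma asym (A:finType) n (P:'I_n -> rel A) i a b :
  profile P -> P i a b -> P i b a -> False.
Proof. move=> hP h1 h2; case: (hP i)=> irr tr _. by move: (tr _ _ _ h1 h2); rewrite irr. Qed.

Lemma neq_of (A:finType) n (P:'I_n -> rel A) i a b :
  profile P -> P i a b -> a != b.
Proof. move=> hP h; apply/eqP=> E; subst; case: (hP i)=> irr _ _; by rewrite irr in h. Qed.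

Lemma rem_eq (V:finType) (T:rel V) x1 y1 x2 y2 :
  [set x1; y1] = [set x2; y2] -> remove_edge T x1 y1 =2 remove_edge T x2 y2.
Proof. by move=> E x y; rewrite /remove_edge E. Qed.

Lemma set2_cases (V:finType) (x y u v : V) : [set x; y] = [set u; v] -> u != v ->
  (x = u /\ y = v) \/ (x = v /\ y = u).
Proof.
move=> E uv.
have hu : u \in [set x; y] by rewrite E !inE eqxx.
have hv : v \in [set x; y] by rewrite E !inE eqxx orbT.
move: hu hv; rewrite !inE => /orP[]/eqP Eu /orP[]/eqP Ev; subst.
- by rewrite eqxx in uv.
- by left.
- by right.
- by rewrite eqxx in uv.
Qed.

Lemma F1aux (V:finType) (T:rel V) u v p y : path T y p ->
  connect (remove_edge T u v) u y || connect (remove_edge T u v) v y ->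
  connect (remove_edge T u v) u (last y p) || connect (remove_edge T u v) v (last y p).
Proof.
elim: p y => [|z p IH] y //= /andP[Tyz pth] H; apply: IH pth _.
case E: ([set y; z] == [set u; v]).
- have: z \in [set u; v] by rewrite -(eqP E) !inE eqxx orbT.
  by rewrite !inE => /orP[]/eqP->; rewrite connect0 ?orbT.
- have Ryz : remove_edge T u v y z by rewrite /remove_edge Tyz E.
  case/orP: H => H; apply/orP; [left|right]; exact: connect_trans H (connect1 Ryz).
Qed.

Lemma F1 (V:finType) (T:rel V) u v x : connect T u x ->
  connect (remove_edge T u v) u x || connect (remove_edge T u v) v x.
Proof.
move=> /connectP [p pth ->]; apply: F1aux pth _; by rewrite connect0.
Qed.

Definition btw (A:finType) n (P:'I_n -> rel A) u w v :=
  forall a b, P u a b -> P v a b -> P w a b.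

Lemma dir1aux (A:finType) n (P:'I_n -> rel A) (T : rel 'I_n) u v w :
  profile P -> reduced P -> (forall x y, connect T x y) -> single_crossing_wrt P T ->
  T u v -> connect (remove_edge T u v) u w -> btw P u w v -> w = u.
Proof.
move=> hP hR hC hSC Tuv Cuw Hb.
have key : forall a b, P u a b -> P w a b.
  move=> a b Pu.
  have ab := neq_of hP Pu.
  case: (hSC a b ab) => [[u' [v' [Tuv' Hu Hv]]]|[Hall|Hall]].
  - case E: ([set u'; v'] == [set u; v]).
    + have Cuw' : connect (remove_edge T u' v') u w by rewrite (eq_connect (rem_eq T (eqP E))).
      have: u \in [set u'; v'] by rewrite (eqP E) !inE eqxx.
      rewrite !inE => /orP[]/eqP Eu; subst u.
      * exact: Hu Cuw'.
      * exfalso; exact: asym hP Pu (Hv _ (connect0 _ _)).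
    + have Ruv : remove_edge T u' v' u v by rewrite /remove_edge Tuv eq_sym E.
      case/orP: (F1 v' (hC u' u)) => Cu.
      * apply: Hb Pu _; apply: Hu; exact: connect_trans Cu (connect1 Ruv).
      * exfalso; exact: asym hP Pu (Hv _ Cu).
  - exact: Hall.
  - exfalso; exact: asym hP Pu (Hall u).
apply: hR => a b.
case Hu: (P u a b); first by apply: key.
apply/negbTE/negP => Hw.
have ab := neq_of hP Hw.
case: (hP u) => _ _ tot.
have := tot a b ab; rewrite Hu /= => Hba.
exact: asym hP Hw (key _ _ Hba).
Qed.

Lemma dir1 (A:finType) n (P:'I_n -> rel A) (T : rel 'I_n) u v w :
  profile P -> reduced P -> is_tree T -> single_crossing_wrt P T ->
  T u v -> btw P u w v -> w = u \/ w = v.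
Proof.
move=> hP hR [[sym irr] hC _] hSC Tuv Hb.
case/orP: (F1 v (hC u w)) => C.
- left; exact: dir1aux hP hR hC hSC Tuv C Hb.
- right; apply: (dir1aux (u:=v) (v:=u)) hP hR hC hSC _ _ _.
  + by rewrite sym.
  + by rewrite (eq_connect (rem_eq T (setUC _ _))).
  + by move=> a b h1 h2; apply: Hb.
Qed.

Lemma dir2 (A:finType) n (P:'I_n -> rel A) (T : rel 'I_n) u v :
  profile P -> is_tree T -> single_crossing_wrt P T ->
  u != v -> ~~ T u v -> exists w, [/\ w != u, w != v & btw P u w v].
Proof.
move=> hP [[sym irr] hC _] hSC uv nTuv.
move: (hC u v) => /connectP [p pth lastv].
case: (shortenP pth) lastv => {pth}p pth uq _ lastv.
case: p pth uq lastv => [|w rest] /=; first by move=> _ _ E; rewrite E eqxx in uv.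
case/andP=> Tuw pth /andP[unin uq] lastv.
have wu : w != u by apply/eqP=> E; subst; rewrite irr in Tuw.
have wv : w != v by apply/eqP=> E; move: nTuv; rewrite -E Tuw.
have Cwv : connect (remove_edge T u w) w v.
  apply/connectP; exists rest => //.
  apply: (sub_in_path (P := predC1 u)) pth.
  + move=> y z; rewrite !inE => yu zu Tyz; rewrite /remove_edge Tyz /=.
    apply/negP => /eqP E.
    have: u \in [set y; z] by rewrite E !inE eqxx.
    by rewrite !inE !(eq_sym u) (negbTE yu) (negbTE zu).
  + rewrite /= wu /=; apply/allP => x xin /=.
    by apply/eqP=> E; subst; rewrite inE xin orbT in unin.
exists w; split => // a b Pu Pv.
have ab := neq_of hP Pu.
case: (hSC a b ab) => [[u' [v' [Tuv' Hu Hv]]]|[Hall|Hall]].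
- case E: ([set u'; v'] == [set u; w]).
  + exfalso.
    have Cwv' : connect (remove_edge T u' v') w v by rewrite (eq_connect (rem_eq T (eqP E))).
    have wu' : u != w by rewrite eq_sym.
    case: (set2_cases (eqP E) wu') => [[E1 E2]|[E1 E2]]; subst.
    * exact: asym hP Pv (Hv _ Cwv').
    * exact: asym hP Pu (Hv _ (connect0 _ _)).
  + have Ruw : remove_edge T u' v' u w by rewrite /remove_edge Tuw eq_sym E.
    case/orP: (F1 v' (hC u' u)) => Cu.
    * apply: Hu; exact: connect_trans Cu (connect1 Ruw).
    * exfalso; exact: asym hP Pu (Hv _ Cu).
- exact: Hall.
- exfalso; exact: asym hP Pu (Hall u).
Qed.

Lemma charT (A:finType) n (P:'I_n -> rel A) (T : rel 'I_n) u v :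
  profile P -> reduced P -> is_tree T -> single_crossing_wrt P T ->
  T u v <-> (u != v /\ forall w, btw P u w v -> w = u \/ w = v).
Proof.
move=> hP hR hT hSC; split.
- move=> Tuv; split; last by move=> w; exact: dir1 hP hR hT hSC Tuv.
  case: hT => [[_ irr] _ _]; apply/eqP=> E; subst; by rewrite irr in Tuv.
- case=> uv H; case Tuv: (T u v) => //.
  case: (dir2 hP hT hSC uv (negbT Tuv)) => w [wu wv hb].
  by case: (H w hb) => E; subst; rewrite eqxx in wu wv.
Qed.

Lemma minaux (A:finType) n (P:'I_n -> rel A) (T : rel 'I_n) u v :
  profile P -> is_tree T -> single_crossing_wrt P T -> T u v ->
  (forall a b, ~ ab_cut P T u v a b /\ ~ ab_cut P T v u a b) ->
  forall a b, P u a b -> P v a b.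
Proof.
move=> hP [[sym irr] hC _] hSC Tuv H a b Pu.
have ab := neq_of hP Pu.
have uv : u != v by apply/eqP=> E; subst; rewrite irr in Tuv.
case: (hSC a b ab) => [[u' [v' cut]]|[Hall|Hall]].
- have cut' := cut; case: cut' => [Tuv' Hu Hv].
  case E: ([set u'; v'] == [set u; v]).
  + exfalso; case: (set2_cases (eqP E) uv) => [[E1 E2]|[E1 E2]]; subst.
    * by case: (H a b) => h _; apply: h.
    * by case: (H a b) => _ h; apply: h.
  + have Ruv : remove_edge T u' v' u v by rewrite /remove_edge Tuv eq_sym E.
    case/orP: (F1 v' (hC u' u)) => Cu.
    * apply: Hu; exact: connect_trans Cu (connect1 Ruv).
    * exfalso; exact: asym hP Pu (Hv _ Cu).
- exact: Hall.
- exfalso; exact: asym hP Pu (Hall u).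
Qed.

Lemma minimal_of (A:finType) n (P:'I_n -> rel A) (T : rel 'I_n) :
  profile P -> reduced P -> is_tree T -> single_crossing_wrt P T -> minimal_wrt P T.
Proof.
move=> hP hR hT hSC u v Tuv.
case: (classic (exists a b, ab_cut P T u v a b \/ ab_cut P T v u a b)) => // N.
exfalso.
have H : forall a b, ~ ab_cut P T u v a b /\ ~ ab_cut P T v u a b.
  by move=> a b; split=> h; apply: N; exists a, b; [left|right].
have Tvu : T v u by case: hT => [[sym _] _ _]; rewrite sym.
have H' : forall a b, ~ ab_cut P T v u a b /\ ~ ab_cut P T u v a b.
  by move=> a b; case: (H a b).
have E : u = v.
  apply: hR => a b; apply/idP/idP.
  - exact: minaux hP hT hSC Tuv H a b.
  - exact: minaux hP hT hSC Tvu H' a b.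
case: hT => [[_ irr] _ _]; subst; by rewrite irr in Tuv.
Qed.

Theorem theorem4 (A : finType) (n : nat) (P : 'I_n -> rel A) :
  profile P -> reduced P ->
  (exists T : rel 'I_n, is_tree T /\ single_crossing_wrt P T) ->
  (exists T : rel 'I_n, [/\ is_tree T, single_crossing_wrt P T & minimal_wrt P T])
  /\
  (forall T1 T2 : rel 'I_n,
      is_tree T1 -> single_crossing_wrt P T1 -> minimal_wrt P T1 ->
      is_tree T2 -> single_crossing_wrt P T2 -> minimal_wrt P T2 ->
      T1 =2 T2).
Proof.
move=> hP hR [T [hT hSC]]; split.
- exists T; split => //; exact: minimal_of.
- move=> T1 T2 h1 s1 _ h2 s2 _ u v; apply/idP/idP.
  + by move/(charT u v hP hR h1 s1)/(charT u v hP hR h2 s2).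
  + by move/(charT u v hP hR h2 s2)/(charT u v hP hR h1 s1).
Qed.
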